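(* Let $G$ be a finite simple graph with vertices $v_1,\dots,v_n$ ($n\ge 1$) in which no vertex is adjacent to all other vertices, let $d\ge 1$ be an integer, let $G'$ be the graph constructed from $(G,d)$ as described in the context, and let $h=n(n+1)+d$. Suppose $S_1,\dots,S_h$ are pairwise disjoint vertex sets of $G'$, each inducing a connected subgraph, such that for all $i\ne j$ some edge of $G'$ joins a vertex of $S_i$ to a vertex of $S_j$. Then each $S_i$ contains exactly one non-middle (i.e. top or bottom) vertex, and each non-middle vertex of $G'$ belongs to exactly one of the sets $S_i$.
   Context: Construction of $G'$ from a graph $G$ with vertices $v_1,\dots,v_n$ and an integer $d$: say $v_i$ dominates $v_j$ if $v_i=v_j$ or $v_iv_j$ is an edge of $G$. The vertex set of $G'$ consists of top vertices $t_1,\dots,t_d$, middle vertices $m_1,\dots,m_n$, and bottom vertices $b_{j,k}$ for $1\le j\le n$, $1\le k\le n+1$. Edges: the top vertices form a clique; the middle vertices form an independent set; the bottom vertices form a clique (of size $n(n+1)$); every top vertex is adjacent to every middle vertex; there are no top–bottom edges; middle vertex $m_i$ is adjacent to bottom vertex $b_{j,k}$ if and only if $v_i$ dominates $v_j$ in $G$. *)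

(* Defs.v *)
From mathcomp Require Import all_boot.
Set Implicit Arguments. Unset Strict Implicit. Unset Printing Implicit Defensive.

(* Vertices of G': top t_1..t_d, middle m_1..m_n, bottom b_{j,k} (j<=n, k<=n+1). *)
Definition gvert (n d : nat) : finType := ('I_d + ('I_n + ('I_n * 'I_n.+1)))%type.

Definition dominates (n : nat) (e : rel 'I_n) (i j : 'I_n) : bool := (i == j) || e i j.

Definition gadj (n d : nat) (e : rel 'I_n) (x y : gvert n d) : bool :=
  match x, y with
  | inl a, inl b => a != b
  | inl _, inr (inl _) => true
  | inr (inl _), inl _ => true
  | inl _, inr (inr _) => false
  | inr (inr _), inl _ => false
  | inr (inl _), inr (inl _) => false
  | inr (inr a), inr (inr b) => a != b
  | inr (inl i), inr (inr (j, _)) => dominates e i j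
  | inr (inr (j, _)), inr (inl i) => dominates e i j
  end.

Definition is_middle (n d : nat) (x : gvert n d) : bool :=
  match x with inr (inl _) => true | _ => false end.

Definition simple_graph (n : nat) (e : rel 'I_n) : Prop :=
  (forall i j, e i j = e j i) /\ (forall i, ~~ e i i).

Definition induces_connected (T : finType) (adj : rel T) (S : {set T}) : Prop :=
  S != set0 /\
  forall x y, x \in S -> y \in S ->
    connect (fun u v => [&& u \in S, v \in S & adj u v]) x y.

(* Main.v *)
Require Import Defs.
From mathcomp Require Import all_boot.
From mathcomp Require Import zify.
Set Implicit Arguments. Unset Strict Implicit. Unset Printing Implicit Defensive.

Section Aux.
Variables (n d : nat) (e : rel 'I_n).

Definition kinj (z : 'I_d + ('I_n * 'I_n.+1)) : gvert n d :=
  match z with inl a => inl a | inr p => inr (inr p) end.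

Lemma kinj_inj : injective kinj.
Proof. by case=> [a|p] [b|q] //= [->]. Qed.

Lemma NM_eq : [set x : gvert n d | ~~ is_middle x] = kinj @: setT.
Proof.
apply/setP=> x; rewrite inE; apply/idP/imsetP.
- case: x => [a|[a|p]] //= _; first by exists (inl a).
  by exists (inr p).
- by case=> [[a|p]] _ ->.
Qed.

Lemma card_NM : #|[set x : gvert n d | ~~ is_middle x]| = d + n * n.+1.
Proof.
rewrite NM_eq card_imset; last exact: kinj_inj.
by rewrite cardsT card_sum card_prod !card_ord.
Qed.

Lemma mid_single (S : {set gvert n d}) x y : induces_connected (gadj e) S ->
  (forall z, z \in S -> is_middle z) -> x \in S -> y \in S -> x = y.
Proof.
move=> [_ hc] hm xS yS; move: (hc x y xS yS) => /connectP [[|z p] /= hp ->] //.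
move: hp => /andP [/and3P [_ zS hxz] _].
move: (hm x xS) (hm z zS) hxz.
by case: x {xS} => [a|[a|q]] //; case: z {zS} => [b|[b|r]].
Qed.
End Aux.

Theorem lemma3 (n d : nat) (e : rel 'I_n)
  (hn : 1 <= n) (hd : 1 <= d)
  (hG : simple_graph e)
  (hnodom : forall i : 'I_n, exists j : 'I_n, j != i /\ ~~ e i j)
  (S : 'I_(n * n.+1 + d) -> {set gvert n d})
  (hdisj : forall i j, i != j -> [disjoint S i & S j])
  (hconn : forall i, induces_connected (gadj e) (S i))
  (hadj : forall i j, i != j ->
     exists x, exists y, [/\ x \in S i, y \in S j & gadj e x y]) :
  (forall i, #|[set x in S i | ~~ is_middle x]| = 1) /\
  (forall x : gvert n d, ~~ is_middle x -> exists! i, x \in S i).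
Proof.
set NM := [set x : gvert n d | ~~ is_middle x].
have cNM : #|NM| = n * n.+1 + d by rewrite card_NM addnC.
have same : forall i j x, x \in S i -> x \in S j -> i = j.
  move=> i j x xi xj; apply/eqP; apply: contraT => hne.
  by move: (hdisj _ _ hne) => /disjointFr/(_ xi); rewrite xj.
have A : forall i, exists x, (x \in S i) && ~~ is_middle x.
  move=> i.
  case: (boolP [exists x, (x \in S i) && ~~ is_middle x]) => [/existsP //|/existsPn hall].
  exfalso.
  have hm : forall z, z \in S i -> is_middle z.
    by move=> z zS; move: (hall z); rewrite zS /= negbK.
  case: (hconn i) => /set0Pn [x0 x0S] _.
  have := hm x0 x0S; case: x0 x0S => [a|[a|p]] // x0S _.
  have single : forall y, y \in S i -> y = inr (inl a) := fun y yS => mid_single (hconn i) hm yS x0S.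
  case: (hnodom a) => c [hca hac].
  pose N : {set gvert n d} := [set y | gadj e (inr (inl a)) y].
  have NB : forall k, inr (inr (c,k)) \notin N.
    by move=> k; rewrite inE /= /dominates (negbTE hac) eq_sym (negbTE hca).
  pose B : {set gvert n d} := [set (inr (inr (c,k)) : gvert n d) | k : 'I_n.+1].
  have cB : #|B| = n.+1.
    rewrite card_imset ?card_ord //.
    by move=> k1 k2 [].
  have BsubNM : B \subset NM.
    by apply/subsetP=> y /imsetP [k _ ->]; rewrite inE.
  have NsubNM : N \subset NM :\: B.
    apply/subsetP=> y yN; rewrite in_setD; apply/andP; split.
      apply/negP => /imsetP [k _ yE]; move: yN; rewrite yE.
      by rewrite (negbTE (NB k)).
    by rewrite inE; move: yN; rewrite inE; case: y => [b|[b|q]].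
  have cN : #|N| <= n * n.+1 + d - n.+1.
    by have := subset_leq_card NsubNM; rewrite cardsD (setIidPr BsubNM) cB cNM.
  pose g j := odflt (inr (inl a)) [pick y in S j :&: N].
  have gj : forall j, j != i -> g j \in S j :&: N.
    move=> j hji; rewrite /g; case: pickP => [y //|hnone].
    have hij : i != j by rewrite eq_sym.
    have [x' [y [x'S yS hxy]]] := hadj i j hij.
    have yN : y \in S j :&: N by rewrite in_setI yS inE -(single _ x'S).
    by move: (hnone y); rewrite /= yN.
  have ginj : {in [set~ i] &, injective g}.
    move=> j1 j2; rewrite !inE => h1 h2 geq.
    have := gj _ h1; have := gj _ h2; rewrite !in_setI geq.
    by case/andP=> g2 _ /andP [g1 _]; apply: same g1 g2.
  have gsub : g @: [set~ i] \subset N.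
    apply/subsetP=> y /imsetP [j hj ->]; rewrite !inE in hj.
    by case/setIP: (gj _ hj).
  have := subset_leq_card gsub; rewrite card_in_imset // cardsC1 card_ord.
  move=> h1; have h2 := leq_trans h1 cN.
  have : n <= n * n.+1 by rewrite leq_pmulr.
  lia.
have f_spec := fun i => xchooseP (A i).
pose f i := xchoose (A i).
have finj : injective f.
  move=> i j fij; have /andP [fi _] := f_spec i; have /andP [fj _] := f_spec j.
  have fj' : f i \in S j by rewrite fij.
  exact: same fi fj'.
have fim : f @: setT = NM.
  apply/eqP; rewrite eqEcard card_imset // cardsT card_ord cNM leqnn andbT.
  apply/subsetP=> y /imsetP [j _ ->]; rewrite inE.
  by have /andP [_ ->] := f_spec j.
split.
  move=> i; suff -> : [set x in S i | ~~ is_middle x] = [set f i] by rewrite cards1.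
  apply/setP=> x; rewrite !inE; apply/andP/eqP.
    case=> xS xm; have : x \in f @: setT by rewrite fim inE.
    case/imsetP=> j _ xE; rewrite xE; congr f; apply: (same j i (f j)) => //.
      by have /andP [] := f_spec j.
    by rewrite -xE.
  by move=> ->; apply/andP; apply: f_spec.
move=> x xm; have : x \in f @: setT by rewrite fim inE.
case/imsetP=> j _ ->; exists j; split.
  by have /andP [] := f_spec j.
move=> j' hj'; apply: (same j j' (f j)) => //.
by have /andP [] := f_spec j.
Qed.
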